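(* Let $m\ge 2$ and let $C_1,\dots,C_m\subset\mathbb{R}^n$ be nonempty, closed, convex sets; put $C=C_1\times\cdots\times C_m$ and, for $a=(a_1,\dots,a_m)\in C$, $D(a)=\sum_{i=1}^m\|a_i-a_{i+1}\|$ with $a_{m+1}=a_1$. Suppose that either (i) all the sets $C_1,\dots,C_m$ are bounded, or (ii) for every index $j\in\{1,\dots,m\}$ such that $C_j$ is unbounded, and for every sequence $(a_j^{(k)})_{k}\subset C_j$ with $\|a_j^{(k)}\|\to\infty$, at least one of $d_{C_{j-1}}(a_j^{(k)})\to\infty$ or $d_{C_{j+1}}(a_j^{(k)})\to\infty$ holds as $k\to\infty$ (indices taken cyclically, $C_0=C_m$, $C_{m+1}=C_1$). Then the problem $\min_{a\in C} D(a)$ admits an optimal solution, i.e. there is $a^*\in C$ with $D(a^* )=\inf_{a\in C}D(a)$.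
   Context: $\|\cdot\|$ is the Euclidean norm on $\mathbb{R}^n$. For a nonempty set $K\subset\mathbb{R}^n$, $d_K(x)=\inf_{y\in K}\|x-y\|$ is the distance function of $K$. The problem $\min_{a\in C}D(a)$ is called the generalized waist problem for the ordered family $(C_1,\dots,C_m)$. *)

(* Defs.v *)
From HB Require Import structures.
From mathcomp Require Import all_boot all_order all_algebra.
From mathcomp Require Import all_classical all_reals all_analysis.
Set Implicit Arguments. Unset Strict Implicit. Unset Printing Implicit Defensive.
Import Order.TTheory GRing.Theory Num.Theory numFieldNormedType.Exports.
Local Open Scope classical_set_scope.
Local Open Scope ring_scope.

Definition enorm (R : realType) (n : nat) (x : 'rV[R]_n) : R :=
  Num.sqrt (\sum_(i < n) x ord0 i ^+ 2).

Definition dist_to (R : realType) (n : nat) (K : set 'rV[R]_n) (x : 'rV[R]_n) : R :=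
  inf [set enorm (x - y) | y in K].

Definition ebounded (R : realType) (n : nat) (K : set 'rV[R]_n) : Prop :=
  exists M : R, forall x, K x -> enorm x <= M.

Definition convexR (R : realType) (n : nat) (K : set 'rV[R]_n) : Prop :=
  convex_set (K : set (convex_lmodType 'rV[R]_n)).

Definition perim (R : realType) (n m : nat) (a : 'I_m -> 'rV[R]_n) : R :=
  \sum_(i < m) enorm (a i - a (ordS i)).

(* Main.v *)
Require Import Defs.
From HB Require Import structures.
From mathcomp Require Import all_boot all_order all_algebra.
From mathcomp Require Import all_classical all_reals all_analysis.
Import Order.TTheory GRing.Theory Num.Theory numFieldNormedType.Exports.
Local Open Scope classical_set_scope.
Local Open Scope ring_scope.

Section Helpers.
Variable R : realType.

Lemma enorm_ge0 n (x : 'rV[R]_n) : 0 <= enorm x.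
Proof. exact: sqrtr_ge0. Qed.

Lemma enorm_sym n (x y : 'rV[R]_n) : enorm (x - y) = enorm (y - x).
Proof.
rewrite /enorm; congr Num.sqrt; apply: eq_bigr => i _.
by rewrite -opprB mxE sqrrN.
Qed.

Lemma coord_le_enorm n (x : 'rV[R]_n) i : `|x ord0 i| <= enorm x.
Proof.
rewrite /enorm -sqrtr_sqr ler_sqrt ?sumr_ge0 // => [|j _]; last exact: sqr_ge0.
by rewrite (bigD1 i) //= lerDl sumr_ge0 // => j _; exact: sqr_ge0.
Qed.

Lemma mxnorm_le_enorm n (x : 'rV[R]_n) : `|x| <= enorm x.
Proof.
have -> : `|x| = mx_norm x by []. rewrite mx_normrE; apply: bigmax_le => [|[i j] _]/=.
  exact: enorm_ge0.
by rewrite (ord1 i); exact: coord_le_enorm.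
Qed.

Lemma enorm_cont n : continuous (@enorm R n).
Proof.
move=> x; apply: (@continuous_comp _ _ _ (fun y : 'rV[R]_n => \sum_(i < n) y ord0 i ^+ 2) Num.sqrt);
  last exact: sqrt_continuous.
apply: (@continuous_big _ _ +%R 0 xpredT add_continuous _ (index_enum _)
   (fun i (y : 'rV[R]_n) => y ord0 i ^+ 2)) => i _.
move=> z; apply: (@continuous_comp _ _ _ (fun y : 'rV[R]_n => y ord0 i) (fun t : R => t ^+ 2));
  first exact: coord_continuous.
exact: exprn_continuous.
Qed.

Lemma dist_le n (K : set 'rV[R]_n) x y : K y -> dist_to K x <= enorm (x - y).
Proof.
move=> Ky; rewrite /dist_to; apply: (ge_inf); last by exists y.
by exists 0 => _ [z _ <-]; exact: enorm_ge0.
Qed.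

Lemma perim_ge n m (b : 'I_m -> 'rV[R]_n) j : enorm (b j - b (ordS j)) <= perim b.
Proof.
rewrite /perim (bigD1 j) //= lerDl sumr_ge0 // => i _; exact: enorm_ge0.
Qed.

Lemma perim_ge' n m (b : 'I_m -> 'rV[R]_n) j : enorm (b j - b (ord_pred j)) <= perim b.
Proof.
by have := @perim_ge n m b (ord_pred j); rewrite ord_predK enorm_sym.
Qed.

End Helpers.

Section Prod.
Import ArrowAsProduct.
Variable R : realType.

Lemma perim_cont n m : continuous (@perim R n m : ('I_m -> 'rV[R]_n) -> R).
Proof.
apply: (@continuous_big _ _ +%R 0 xpredT add_continuous _ (index_enum _)
   (fun i (b : 'I_m -> 'rV[R]_n) => enorm (b i - b (ordS i)))) => i _ b.
apply: (@continuous_comp _ _ _ (fun b : 'I_m -> 'rV[R]_n => b i - b (ordS i)) (@enorm R n));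
  last exact: enorm_cont.
apply: (@continuousB _ _ _ (proj i) (proj (ordS i))); exact: proj_continuous.
Qed.

Lemma prod_compact n m (B : 'I_m -> set 'rV[R]_n) : (forall i, compact (B i)) ->
  compact [set b : 'I_m -> 'rV[R]_n | forall i, B i (b i)].
Proof. move=> HB; exact: (@tychonoff _ (fun _ => 'rV[R]_n) B HB). Qed.

Lemma min_exists n m (A : set ('I_m -> 'rV[R]_n)) :
  A !=set0 -> (forall B : 'I_m -> set 'rV[R]_n, (forall i, compact (B i)) ->
    A = [set b | forall i, B i (b i)] -> exists2 a, A a & forall b, A b -> perim a <= perim b).
Proof.
move=> A0 B HB EA; subst A.
have [c cA Hc] := compact_EVT_min A0 (@prod_compact n m B HB) (continuous_subspaceT (@perim_cont n m)).
exists c; first by move: cA; rewrite inE.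
by move=> b Hb; apply: Hc; rewrite inE.
Qed.

End Prod.

Theorem mainTheorem1 (R : realType) (n m : nat) (C : 'I_m -> set 'rV[R]_n) :
  (2 <= m)%N ->
  (forall i, C i !=set0) ->
  (forall i, closed (C i)) ->
  (forall i, convexR (C i)) ->
  ((forall i, ebounded (C i)) \/
   (forall j : 'I_m, ~ ebounded (C j) ->
      forall u : nat -> 'rV[R]_n, (forall k, C j (u k)) ->
        (fun k => enorm (u k)) @ \oo --> +oo ->
        ((fun k => dist_to (C (ord_pred j)) (u k)) @ \oo --> +oo \/
         (fun k => dist_to (C (ordS j)) (u k)) @ \oo --> +oo))) ->
  exists a : 'I_m -> 'rV[R]_n, (forall i, C i (a i)) /\
    perim a = inf [set perim b | b in [set b : 'I_m -> 'rV[R]_n | forall i, C i (b i)]].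
Proof.
move=> _ Cne Ccl _ Hcase.
have [b0 Hb0] : exists b0 : 'I_m -> 'rV[R]_n, forall i, C i (b0 i).
  have /choice[f Hf] : forall i, exists x, C i x by move=> i; case: (Cne i) => x; exists x.
  by exists f.
set c := perim b0.
have Hbnd : forall j, exists M : R, forall b, (forall i, C i (b i)) -> perim b <= c ->
    enorm (b j) <= M.
  move=> j; case: Hcase => [Hb|Hu].
    by case: (Hb j) => M HM; exists M => b Hb' _; exact: HM.
  apply: contrapT => Hno.
  have Hk : forall k : nat, exists b, (forall i, C i (b i)) /\ perim b <= c /\
      k%:R < enorm (b j).
    move=> k; apply: contrapT => Hk'; apply: Hno; exists k%:R => b Hb1 Hb2.
    rewrite leNgt; apply/negP => Hlt; apply: Hk'; by exists b.
  have /choice[bs Hbs] := Hk.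
  have Hinf : (fun k => enorm (bs k j)) @ \oo --> +oo.
    apply/cvgryPge => A; exists (Num.truncn A).+1 => // k /= Hk1.
    have [_ [_ H3]] := Hbs k; apply/ltW/(lt_trans (truncnS_gt A))/(le_lt_trans _ H3).
    by rewrite ler_nat.
  have Hunb : ~ ebounded (C j).
    move=> [M HM]; have [H1 [_ H3]] := Hbs (Num.truncn M).+1.
    have := HM _ (H1 j); rewrite leNgt => /negP; apply.
    exact: (lt_trans (truncnS_gt M)).
  have [Hd|Hd] := Hu j Hunb (fun k => bs k j) (fun k => (Hbs k).1 j) Hinf.
  - have [k /= Hk2] := filter_ex (cvgry_gt Hd c).
    have [H1 [H2 _]] := Hbs k.
    have := le_trans (@dist_le _ n _ _ _ (H1 (ord_pred j))) (le_trans (@perim_ge' _ n m _ j) H2).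
    by rewrite leNgt Hk2.
  - have [k /= Hk2] := filter_ex (cvgry_gt Hd c).
    have [H1 [H2 _]] := Hbs k.
    have := le_trans (@dist_le _ n _ _ _ (H1 (ordS j))) (le_trans (@perim_ge _ n m _ j) H2).
    by rewrite leNgt Hk2.
have /choice[Ms HMs] := Hbnd.
pose B i := C i `&` closed_ball_ Num.norm (0 : 'rV[R]_n) (Ms i).
pose A := [set b : 'I_m -> 'rV[R]_n | (forall i, C i (b i)) /\ perim b <= c].
have HBc : forall i, compact (B i).
  move=> i; apply: bounded_closed_compact.
    exists (Ms i); split; first by rewrite num_real.
    move=> M HM x [_]; rewrite /closed_ball_ /= sub0r normrN => Hx; exact/ltW/(le_lt_trans Hx).
  apply: closedI; [exact: Ccl | exact: closed_closed_ball_].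
have memB : forall b, (forall i, C i (b i)) -> perim b <= c -> forall i, B i (b i).
  move=> b H1 H2 i; split => //; rewrite /closed_ball_ /= sub0r normrN.
  exact: le_trans (@mxnorm_le_enorm _ n _) (HMs i b H1 H2).
have [a Ha1 Hamin] : exists2 a, [set b | forall i, B i (b i)] a &
    forall b, [set b | forall i, B i (b i)] b -> perim a <= perim b.
  have A0 : [set b : 'I_m -> 'rV[R]_n | forall i, B i (b i)] !=set0.
    by exists b0; apply: memB => //; exact: lexx.
  exact: (@min_exists R n m [set b | forall i, B i (b i)] A0 B HBc erefl).
exists a; split; first by move=> i; exact: (Ha1 i).1.
have Hac : perim a <= c by apply: Hamin; apply: memB => //; exact: lexx.
apply/eqP; rewrite eq_le; apply/andP; split.
  apply: lb_le_inf; first by exists c, b0.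
  move=> _ [b Hb <-].
  have [Hle|Hlt] := leP (perim b) c.
    by apply: Hamin; exact: memB.
  exact: le_trans Hac (ltW Hlt).
apply: ge_inf; last by exists a => // i; exact: (Ha1 i).1.
by exists 0 => _ [b _ <-]; rewrite /perim sumr_ge0 // => i _; exact: enorm_ge0.
Qed.
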